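(* Let $k,t\ge0$ be integers. Then for every $\theta\in\mathbb{R}$, \[ \Big|\frac{d^k}{d\theta^k}P_t(e^{i\theta})\Big|,\ \Big|\frac{d^k}{d\theta^k}Q_t(e^{i\theta})\Big|\le 2^{kt+(t+1)/2}. \] In particular, with $T=2^{t+10}$ and $\alpha,\beta$ as in the context, $|\alpha^{(k)}(x)|,|\beta^{(k)}(x)|\le 2^{-10k}$ for every integer $k\ge1$ and every $x\in\mathbb{R}$.
   Context: Rudin–Shapiro polynomials: $P_0(z)=Q_0(z)=1$ and for $s\ge0$, $P_{s+1}(z)=P_s(z)+z^{2^s}Q_s(z)$, $Q_{s+1}(z)=P_s(z)-z^{2^s}Q_s(z)$. For the integer $t$, set $T:=2^{t+10}$ and for $x\in\mathbb{R}$ define $\alpha(x):=2^{-(t+1)/2}P_t(e^{ix/T})$ and $\beta(x):=2^{-(t+1)/2}Q_t(e^{ix/T})$. *)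

(* Defs.v *)
From Stdlib Require Import Reals.
From Coquelicot Require Import Coquelicot.
Open Scope R_scope.

(* Rudin--Shapiro polynomials as polynomial functions on the complex plane:
   RS s z = (P_s(z), Q_s(z)), with
   P_0 = Q_0 = 1, P_{s+1}(z) = P_s(z) + z^(2^s) Q_s(z),
   Q_{s+1}(z) = P_s(z) - z^(2^s) Q_s(z). *)
Fixpoint RS (s : nat) (z : Complex.C) : Complex.C * Complex.C :=
  match s with
  | O => (RtoC 1, RtoC 1)
  | S s' =>
      let (p, q) := RS s' z in
      (Cplus p (Cmult (pow_n z (2 ^ s')) q),
       Cminus p (Cmult (pow_n z (2 ^ s')) q))
  end.

Definition RS_P (s : nat) (z : Complex.C) : Complex.C := fst (RS s z).
Definition RS_Q (s : nat) (z : Complex.C) : Complex.C := snd (RS s z).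

Definition cexpi (theta : R) : Complex.C := (cos theta, sin theta).

Definition CDerive_n (f : R -> Complex.C) (k : nat) (x : R) : Complex.C :=
  (Derive_n (fun y => Re (f y)) k x, Derive_n (fun y => Im (f y)) k x).

Definition RS_T (t : nat) : R := 2 ^ (t + 10).
Definition RS_alpha (t : nat) (x : R) : Complex.C :=
  Cmult (RtoC (Rpower 2 (- (INR t + 1) / 2))) (RS_P t (cexpi (x / RS_T t))).
Definition RS_beta (t : nat) (x : R) : Complex.C :=
  Cmult (RtoC (Rpower 2 (- (INR t + 1) / 2))) (RS_Q t (cexpi (x / RS_T t))).

(* Main.v *)
Require Import Defs.
From Stdlib Require Import Reals.
From Coquelicot Require Import Coquelicot.
Open Scope R_scope.
From Stdlib Require Import Lra Lia.
Open Scope R_scope.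

Lemma Derive_n_family (F : nat -> R -> R) :
  (forall k x, is_derive (F k) x (F (S k) x)) ->
  forall k x, Derive_n (F 0%nat) k x = F k x.
Proof.
  intros H k. induction k as [|k IH]; intros x; simpl. reflexivity.
  rewrite (Derive_ext _ (F k) x IH). apply is_derive_unique, H.
Qed.

Definition CD (f : R -> C) (x : R) (l : C) : Prop :=
  is_derive (fun y => Re (f y)) x (Re l) /\ is_derive (fun y => Im (f y)) x (Im l).

Lemma is_derive_val (f : R -> R) x l l' : is_derive f x l -> l = l' -> is_derive f x l'.
Proof. intros H ->; exact H. Qed.

Lemma is_derive_Rmult (f g : R -> R) x df dg : is_derive f x df -> is_derive g x dg ->
  is_derive (fun y => f y * g y) x (df * g x + f x * dg).
Proof. intros. apply (is_derive_mult f g); auto. intros; apply Rmult_comm. Qed.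

Lemma CD_val f x l l' : CD f x l -> l = l' -> CD f x l'.
Proof. intros H ->; exact H. Qed.

Lemma CD_family (F : nat -> R -> C) :
  (forall k x, CD (F k) x (F (S k) x)) ->
  forall k x, CDerive_n (F 0%nat) k x = F k x.
Proof.
  intros H k x. unfold CDerive_n.
  rewrite (Derive_n_family (fun k y => Re (F k y))).
  rewrite (Derive_n_family (fun k y => Im (F k y))).
  destruct (F k x); reflexivity.
  intros; apply H. intros; apply H.
Qed.

Lemma CD_const (c : C) x : CD (fun _ => c) x (RtoC 0).
Proof. split; simpl; apply (is_derive_const (V:=R_NormedModule)). Qed.

Lemma CD_plus f g x df dg : CD f x df -> CD g x dg ->
  CD (fun y => Cplus (f y) (g y)) x (Cplus df dg).
Proof.
  intros [H1 H2] [H3 H4]; split; simpl.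
  apply (is_derive_plus (fun y => Re (f y)) (fun y => Re (g y))); auto.
  apply (is_derive_plus (fun y => Im (f y)) (fun y => Im (g y))); auto.
Qed.

Lemma CD_minus f g x df dg : CD f x df -> CD g x dg ->
  CD (fun y => Cminus (f y) (g y)) x (Cminus df dg).
Proof.
  intros [H1 H2] [H3 H4]; split; simpl.
  apply (is_derive_minus (fun y => Re (f y)) (fun y => Re (g y))); auto.
  apply (is_derive_minus (fun y => Im (f y)) (fun y => Im (g y))); auto.
Qed.

Lemma CD_mult f g x df dg : CD f x df -> CD g x dg ->
  CD (fun y => Cmult (f y) (g y)) x (Cplus (Cmult df (g x)) (Cmult (f x) dg)).
Proof.
  intros [H1 H2] [H3 H4]; split; simpl.
  - pose proof (is_derive_Rmult _ _ _ _ _ H1 H3) as A.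
    pose proof (is_derive_Rmult _ _ _ _ _ H2 H4) as B.
    pose proof (is_derive_minus _ _ _ _ _ A B) as E.
    eapply is_derive_val. exact E.
    unfold minus, plus, opp; simpl. unfold Re, Im. ring.
  - pose proof (is_derive_Rmult _ _ _ _ _ H1 H4) as A.
    pose proof (is_derive_Rmult _ _ _ _ _ H2 H3) as B.
    pose proof (is_derive_plus _ _ _ _ _ A B) as E.
    eapply is_derive_val. exact E.
    unfold minus, plus, opp; simpl. unfold Re, Im. ring.
Qed.

Lemma CD_cexpi (a x : R) : CD (fun y => cexpi (a * y)) x (Cmult (0, a) (cexpi (a * x))).
Proof.
  split; unfold cexpi; simpl.
  - auto_derive; [exact I | ring].
  - auto_derive; [exact I | ring].
Qed.

Lemma CD_comp f (u x : R) l : CD f (x * u) l ->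
  CD (fun y => f (y * u)) x (Cmult (RtoC u) l).
Proof.
  intros [H1 H2]; split; simpl.
  - eapply is_derive_val.
    apply (is_derive_comp (fun y => Re (f y)) (fun y => y * u) x (Re l) u). exact H1.
    auto_derive; [exact I | ring].
    unfold scal; simpl; unfold mult; simpl; unfold Re, Im; ring.
  - eapply is_derive_val.
    apply (is_derive_comp (fun y => Im (f y)) (fun y => y * u) x (Im l) u). exact H2.
    auto_derive; [exact I | ring].
    unfold scal; simpl; unfold mult; simpl; unfold Re, Im; ring.
Qed.
Ltac Ceq := apply injective_projections; simpl; ring.

Fixpoint Hf (Qf : nat -> R -> C) (a : R) (m j : nat) (x : R) : C :=
  match m with
  | O => Qf j x
  | S m' => Cplus (Cmult (0, a) (Hf Qf a m' j x)) (Hf Qf a m' (S j) x)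
  end.

Fixpoint Fam (s : nat) : nat -> R -> C * C :=
  match s with
  | O => fun k _ => match k with O => (RtoC 1, RtoC 1) | S _ => (RtoC 0, RtoC 0) end
  | S s' => fun k x =>
      (Cplus (fst (Fam s' k x))
         (Cmult (cexpi (INR (2 ^ s') * x)) (Hf (fun j y => snd (Fam s' j y)) (INR (2 ^ s')) k 0 x)),
       Cminus (fst (Fam s' k x))
         (Cmult (cexpi (INR (2 ^ s') * x)) (Hf (fun j y => snd (Fam s' j y)) (INR (2 ^ s')) k 0 x)))
  end.

Lemma Hf_deriv Qf a : (forall j x, CD (Qf j) x (Qf (S j) x)) ->
  forall m j x, CD (Hf Qf a m j) x (Hf Qf a m (S j) x).
Proof.
  intros H m. induction m as [|m IH]; intros j x; simpl. apply H.
  eapply CD_val. apply CD_plus. apply CD_mult. apply CD_const. apply IH. apply IH.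
  Ceq.
Qed.

Lemma Fam_deriv s : forall k x,
  CD (fun y => fst (Fam s k y)) x (fst (Fam s (S k) x)) /\
  CD (fun y => snd (Fam s k y)) x (snd (Fam s (S k) x)).
Proof.
  induction s as [|s IH]; intros k x.
  - destruct k; simpl; split; apply CD_const.
  - assert (HH : forall j y, CD (fun y => snd (Fam s j y)) y (snd (Fam s (S j) y))) by (intros; apply IH).
    pose proof (Hf_deriv _ (INR (2 ^ s)) HH k 0 x) as Hd.
    pose proof (CD_cexpi (INR (2 ^ s)) x) as Hw.
    pose proof (CD_mult _ _ _ _ _ Hw Hd) as Hm.
    destruct (IH k x) as [Hp _].
    split; simpl.
    + eapply CD_val. apply (CD_plus _ _ _ _ _ Hp Hm). Ceq.
    + eapply CD_val. apply (CD_minus _ _ _ _ _ Hp Hm). Ceq.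
Qed.

Lemma pow_cexpi z n : pow_n (cexpi z) n = cexpi (INR n * z).
Proof.
  induction n as [|n IH]; simpl pow_n.
  - unfold cexpi. rewrite Rmult_0_l, cos_0, sin_0. reflexivity.
  - rewrite IH, S_INR. unfold cexpi, mult; simpl.
    replace ((INR n + 1) * z) with (z + INR n * z) by ring.
    rewrite cos_plus, sin_plus. apply injective_projections; simpl; ring.
Qed.

Lemma Fam0 s x : Fam s 0 x = RS s (cexpi x).
Proof.
  induction s as [|s IH]; simpl. reflexivity.
  rewrite IH. destruct (RS s (cexpi x)) as [p q]. simpl.
  rewrite pow_cexpi. reflexivity.
Qed.

Lemma Cmod_sq z : Cmod z ^ 2 = fst z ^ 2 + snd z ^ 2.
Proof. unfold Cmod. rewrite pow2_sqrt; [reflexivity | nra]. Qed.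

Lemma Cmod_Ia a z : 0 <= a -> Cmod (Cmult (0, a) z) = a * Cmod z.
Proof.
  intros Ha. rewrite Cmod_mult. f_equal. unfold Cmod; simpl.
  replace (0 * (0 * 1) + a * (a * 1)) with (a ^ 2) by ring. apply sqrt_pow2; auto.
Qed.

Lemma Cmod_cexpi t : Cmod (cexpi t) = 1.
Proof.
  unfold Cmod, cexpi; simpl.
  pose proof (sin2_cos2 t) as H. unfold Rsqr in H.
  replace (cos t * (cos t * 1) + sin t * (sin t * 1)) with 1 by lra. apply sqrt_1.
Qed.

Lemma parallelogram p u :
  Cmod (Cplus p u) ^ 2 + Cmod (Cminus p u) ^ 2 = 2 * (Cmod p ^ 2 + Cmod u ^ 2).
Proof. rewrite !Cmod_sq. simpl. ring. Qed.

Lemma Cmod_split h q : Cmod h <= Cmod q + Cmod (Cminus h q).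
Proof.
  replace h with (Cplus q (Cminus h q)) at 1 by Ceq. apply Cmod_triangle.
Qed.

Section HB.
Variables (Qf : nat -> R -> C) (c r : R).
Hypothesis (Hc : 0 <= c) (Hr : 0 <= r) (HQ : forall j x, Cmod (Qf j x) <= c * r ^ j).

Lemma Hf_bound1 : forall m j x, Cmod (Hf Qf r m j x) <= c * r ^ j * (2 * r) ^ m.
Proof.
  induction m as [|m IH]; intros j x; simpl.
  - rewrite Rmult_1_r. apply HQ.
  - eapply Rle_trans. apply Cmod_triangle. rewrite Cmod_Ia by auto.
    pose proof (IH j x). pose proof (IH (S j) x). simpl in H0.
    assert (0 <= r * Cmod (Hf Qf r m j x) <= r * (c * r ^ j * (2 * r) ^ m)).
    { split. apply Rmult_le_pos; auto; apply Cmod_ge_0. apply Rmult_le_compat_l; auto. }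
    nra.
Qed.

Lemma Hf_bound2 : forall m j x,
  Cmod (Cminus (Hf Qf r m j x) (Qf (m + j)%nat x)) <= c * r ^ j * ((2 * r) ^ m - r ^ m).
Proof.
  induction m as [|m IH]; intros j x; simpl.
  - replace (Cminus (Qf j x) (Qf j x)) with (RtoC 0) by Ceq. rewrite Cmod_0. lra.
  - replace (Cminus (Cplus (Cmult (0, r) (Hf Qf r m j x)) (Hf Qf r m (S j) x)) (Qf (S (m + j)) x))
      with (Cplus (Cmult (0, r) (Hf Qf r m j x)) (Cminus (Hf Qf r m (S j) x) (Qf (m + S j)%nat x))).
    2: { replace (m + S j)%nat with (S (m + j)) by lia. Ceq. }
    eapply Rle_trans. apply Cmod_triangle. rewrite Cmod_Ia by auto.
    pose proof (Hf_bound1 m j x). pose proof (IH (S j) x). simpl in H0.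
    assert (r * Cmod (Hf Qf r m j x) <= r * (c * r ^ j * (2 * r) ^ m)).
    { apply Rmult_le_compat_l; auto. }
    nra.
Qed.
End HB.

Lemma sq_le_aux a b q : 0 <= b -> a ^ 2 + q ^ 2 <= b ^ 2 -> q <= b.
Proof.
  intros Hb H. apply Rsqr_incr_0_var; auto. unfold Rsqr.
  assert (0 <= a ^ 2) by (apply pow2_ge_0). simpl in *. nra.
Qed.

Definition cc (s : nat) : R := sqrt 2 ^ S s.

Lemma cc_pos s : 0 <= cc s.
Proof. unfold cc. apply pow_le. apply sqrt_pos. Qed.

Lemma Fam_bound s : forall k x,
  Cmod (fst (Fam s k x)) ^ 2 + Cmod (snd (Fam s k x)) ^ 2 <= (cc s * (2 ^ s) ^ k) ^ 2.
Proof.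
  induction s as [|s IH]; intros k x.
  - unfold cc; simpl. assert (H2: sqrt 2 * sqrt 2 = 2) by (apply sqrt_sqrt; lra).
    destruct k; simpl; [rewrite Cmod_1 | rewrite Cmod_0]; nra.
  - set (r := 2 ^ s).
    assert (Hr : 0 <= r) by (apply pow_le; lra).
    assert (Er : INR (2 ^ s) = r) by (unfold r; rewrite pow_INR; reflexivity).
    assert (HQ : forall j y, Cmod (snd (Fam s j y)) <= cc s * r ^ j).
    { intros j y. eapply sq_le_aux. 2: apply (IH j y).
      apply Rmult_le_pos; [apply cc_pos | apply pow_le; auto]. }
    simpl fst; simpl snd. rewrite Er.
    set (H := Hf (fun j y => snd (Fam s j y)) r k 0 x).
    set (P := fst (Fam s k x)). set (w := cexpi (r * x)).
    rewrite parallelogram, Cmod_mult. unfold w; rewrite Cmod_cexpi, Rmult_1_l.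
    pose proof (Hf_bound2 (fun j y => snd (Fam s j y)) (cc s) r Hr HQ k 0 x) as E.
    fold H in E. rewrite Nat.add_0_r in E. simpl in E. rewrite Rmult_1_r in E.
    pose proof (Cmod_split H (snd (Fam s k x))) as S1.
    pose proof (IH k x) as B. fold P in B. fold r in B.
    set (p := Cmod P) in *. set (q := Cmod (snd (Fam s k x))) in *.
    set (h := Cmod H) in *. set (e := Cmod (Cminus H (snd (Fam s k x)))) in *.
    assert (0 <= p) by apply Cmod_ge_0. assert (0 <= q) by apply Cmod_ge_0.
    assert (0 <= h) by apply Cmod_ge_0. assert (0 <= e) by apply Cmod_ge_0.
    assert (Hc2 : cc (S s) = sqrt 2 * cc s) by (unfold cc; reflexivity).
    assert (Hs2 : sqrt 2 ^ 2 = 2) by (apply pow2_sqrt; lra).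
    replace (2 ^ S s) with (2 * r) by reflexivity.
    rewrite Hc2.
    set (C0 := cc s) in *. set (Y := (2 * r) ^ k) in *. set (R0 := r ^ k) in *.
    assert (0 <= C0) by apply cc_pos.
    assert (0 <= R0) by (apply pow_le; auto).
    assert (q <= C0 * R0) by (eapply sq_le_aux; [apply Rmult_le_pos; auto | exact B]).
    assert (h ^ 2 <= (q + e) ^ 2) by nra.
    assert (p ^ 2 + h ^ 2 <= (C0 * R0 + e) ^ 2) by nra.
    assert (C0 * R0 + e <= C0 * Y) by nra.
    assert (0 <= C0 * R0 + e) by nra.
    replace ((sqrt 2 * C0 * Y) ^ 2) with (sqrt 2 ^ 2 * (C0 * Y) ^ 2) by ring.
    rewrite Hs2. nra.
Qed.

Definition sel (b : bool) (p : C * C) : C := if b then fst p else snd p.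

Lemma Fam_deriv_sel b t k x : CD (fun y => sel b (Fam t k y)) x (sel b (Fam t (S k) x)).
Proof. destruct b; apply Fam_deriv. Qed.

Lemma Fam_bound_sel b t k x : Cmod (sel b (Fam t k x)) <= cc t * (2 ^ t) ^ k.
Proof.
  assert (0 <= cc t * (2 ^ t) ^ k) by (apply Rmult_le_pos; [apply cc_pos | apply pow_le, pow_le; lra]).
  pose proof (Fam_bound t k x). destruct b; simpl; eapply sq_le_aux; eauto.
  rewrite Rplus_comm; eauto.
Qed.

Lemma CDerive_n_ext f g k x : (forall y, f y = g y) -> CDerive_n f k x = CDerive_n g k x.
Proof.
  intros H. unfold CDerive_n. rewrite (Derive_n_ext (fun y => Re (f y)) (fun y => Re (g y))).
  rewrite (Derive_n_ext (fun y => Im (f y)) (fun y => Im (g y))). reflexivity.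
  intros; rewrite H; auto. intros; rewrite H; auto.
Qed.

Lemma sqrt2_pos : 0 < sqrt 2.
Proof. apply sqrt_lt_R0; lra. Qed.

Lemma Rp_half t : Rpower 2 ((INR t + 1) / 2) = cc t.
Proof.
  replace ((INR t + 1) / 2) with (/ 2 * INR (S t)) by (rewrite S_INR; field).
  rewrite <- Rpower_mult, Rpower_sqrt by lra. rewrite Rpower_pow by apply sqrt2_pos.
  reflexivity.
Qed.

Lemma Rp_eq t k : Rpower 2 (INR (k * t) + (INR t + 1) / 2) = cc t * (2 ^ t) ^ k.
Proof.
  rewrite Rpower_plus, Rpower_pow by lra. rewrite Nat.mul_comm, pow_mult, Rp_half. ring.
Qed.

Lemma part1 b k t theta :
  Cmod (CDerive_n (fun th => sel b (RS t (cexpi th))) k theta)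
    <= Rpower 2 (INR (k * t) + (INR t + 1) / 2).
Proof.
  rewrite (CDerive_n_ext _ (fun y => sel b (Fam t 0 y))) by (intros; rewrite Fam0; auto).
  rewrite (CD_family (fun k y => sel b (Fam t k y))).
  rewrite Rp_eq. apply Fam_bound_sel.
  intros; apply Fam_deriv_sel.
Qed.

Definition AF (b : bool) (t k : nat) (y : R) : C :=
  Cmult (RtoC (Rpower 2 (- (INR t + 1) / 2) * (/ RS_T t) ^ k)) (sel b (Fam t k (y * / RS_T t))).

Lemma AF_deriv b t k x : CD (AF b t k) x (AF b t (S k) x).
Proof.
  unfold AF. eapply CD_val. apply CD_mult. apply CD_const.
  apply (CD_comp (fun y => sel b (Fam t k y))). apply Fam_deriv_sel.
  simpl. Ceq.
Qed.

Lemma part2 b t k x :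
  Cmod (CDerive_n (fun y => Cmult (RtoC (Rpower 2 (- (INR t + 1) / 2)))
           (sel b (RS t (cexpi (y / RS_T t))))) k x) <= Rpower 2 (- (10 * INR k)).
Proof.
  rewrite (CDerive_n_ext _ (AF b t 0)).
  2: { intros y. unfold AF. rewrite Fam0, pow_O, Rmult_1_r. reflexivity. }
  rewrite (CD_family (AF b t)) by (intros; apply AF_deriv).
  unfold AF. rewrite Cmod_mult, Cmod_R.
  assert (HT : 0 < RS_T t) by (unfold RS_T; apply pow_lt; lra).
  assert (Hc0 : Rpower 2 (- (INR t + 1) / 2) = / cc t).
  { replace (- (INR t + 1) / 2) with (- ((INR t + 1) / 2)) by field.
    rewrite Rpower_Ropp, Rp_half. reflexivity. }
  assert (Hcc : 0 < cc t) by (unfold cc; apply pow_lt, sqrt2_pos).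
  assert (Hpos : 0 <= Rpower 2 (- (INR t + 1) / 2) * (/ RS_T t) ^ k).
  { rewrite Hc0. apply Rmult_le_pos. left; apply Rinv_0_lt_compat; auto.
    apply pow_le. left; apply Rinv_0_lt_compat; auto. }
  rewrite Rabs_pos_eq by exact Hpos.
  eapply Rle_trans. apply Rmult_le_compat_l. exact Hpos. apply Fam_bound_sel.
  right.
  assert (H10 : Rpower 2 (- (10 * INR k)) = (/ 2 ^ 10) ^ k).
  { rewrite Rpower_Ropp, <- Rpower_mult.
    assert (E10 : 10 = INR 10) by (rewrite INR_IZR_INZ; reflexivity). rewrite E10 at 1.
    rewrite (Rpower_pow 10 2) by lra. rewrite Rpower_pow by (apply pow_lt; lra).
    rewrite pow_inv. reflexivity. }
  rewrite H10, Hc0. unfold RS_T. rewrite pow_add, Rinv_mult, Rpow_mult_distr, !pow_inv.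
  field. split; [apply pow_nonzero, pow_nonzero; lra | split; [ | lra]].
  apply pow_nonzero, pow_nonzero; lra.
Qed.

Theorem lemma3p6 :
  (forall (k t : nat) (theta : R),
      Cmod (CDerive_n (fun th => RS_P t (cexpi th)) k theta)
        <= Rpower 2 (INR (k * t) + (INR t + 1) / 2) /\
      Cmod (CDerive_n (fun th => RS_Q t (cexpi th)) k theta)
        <= Rpower 2 (INR (k * t) + (INR t + 1) / 2)) /\
  (forall (t k : nat) (x : R), (1 <= k)%nat ->
      Cmod (CDerive_n (RS_alpha t) k x) <= Rpower 2 (- (10 * INR k)) /\
      Cmod (CDerive_n (RS_beta t) k x) <= Rpower 2 (- (10 * INR k))).
Proof.
  split.
  - intros k t theta. split; [apply (part1 true) | apply (part1 false)].
  - intros t k x _. split; [apply (part2 true) | apply (part2 false)].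
Qed.
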